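(* Let $f_i$ and $f_j$ be IID cluster finite set densities on finite subsets of $\mathbb{R}^d$ with cardinality pmfs $p_i,p_j$ on $\{0,1,2,\ldots\}$ and single-object localisation densities $\rho_i,\rho_j$ on $\mathbb{R}^d$, and let $\omega\in[0,1]$. Let $z_\omega=\int_{\mathbb{R}^d}\rho_i^{(1-\omega)}(x)\rho_j^{\omega}(x)\,\mathrm{d}x$, $$N_\omega=\sum_{n'=0}^\infty p_i^{(1-\omega)}(n')\,p_j^{\omega}(n')\,z_\omega^{n'},\qquad p_\omega(n)=\frac{1}{N_\omega}p_i^{(1-\omega)}(n)\,p_j^{\omega}(n)\,z_\omega^{n}.$$ Then for any number of objects $n\ge1$ with $p_i(n)\neq0$ and $p_j(n)\neq0$, the fused cardinality satisfies $p_\omega(n)<\min\{p_i(n),p_j(n)\}$ if $z_\omega<\mathcal{I}_{\omega,n}$, where $$\mathcal{I}_{\omega,n}=\left(N_\omega\frac{\min\{p_i(n),p_j(n)\}}{p_i^{(1-\omega)}(n)\,p_j^{\omega}(n)}\right)^{1/n}.$$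
   Context: An IID cluster finite set density with cardinality pmf $p$ and (probability) density $\rho$ on $\mathbb{R}^d$ is $f(\{x_1,\ldots,x_n\})=p(n)\,n!\prod_{k=1}^n\rho(x_k)$. For two such densities, the cardinality distribution of the exponential mixture density $f_\omega\propto f_i^{1-\omega}f_j^{\omega}$ (normalised with respect to the set integral) is the pmf $p_\omega$ given in the claim. *)

(* Defs.v *)
From HB Require Import structures.
From mathcomp Require Import all_boot all_order all_algebra.
From mathcomp Require Import all_classical all_reals all_analysis.
Set Implicit Arguments. Unset Strict Implicit. Unset Printing Implicit Defensive.
Import Order.TTheory GRing.Theory Num.Theory numFieldNormedType.Exports.
Local Open Scope classical_set_scope.
Local Open Scope ring_scope.

(* Euclidean space R^(n+1) as an iterated product measurable space
   R^1 = R, R^(n+2) = R^(n+1) * R, with the (product) Borel sigma-algebra. *)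
Fixpoint Rsp1 (R : realType) (n : nat) : {disp : measure_display & measurableType disp} :=
  match n with
  | 0 => existT measurableType _ (measurableTypeR R)
  | n'.+1 => existT measurableType _ (projT2 (Rsp1 R n') * measurableTypeR R)%type
  end.

Definition Rd1 (R : realType) (n : nat) : measurableType (projT1 (Rsp1 R n)) :=
  projT2 (Rsp1 R n).

Fixpoint lebd1 (R : realType) (n : nat) : {measure set (Rd1 R n) -> \bar R} :=
  match n return {measure set (Rd1 R n) -> \bar R} with
  | 0 => (@lebesgue_measure R : {measure set (measurableTypeR R) -> \bar R})
  | n'.+1 =>
      (((lebd1 R n') \x (@lebesgue_measure R))%E
         : {measure set (Rd1 R n' * measurableTypeR R)%type -> \bar R})
  end.

(* R^d for d >= 1 (for d = 0 this is a junk copy of R^1; the theorem assumes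
   0 < d), and Lebesgue measure on it. *)
Definition Rd (R : realType) (d : nat) := Rd1 R d.-1.
Definition lebd (R : realType) (d : nat) : {measure set (Rd R d) -> \bar R} :=
  lebd1 R d.-1.

Definition is_density (R : realType) (d : nat) (rho : Rd R d -> R) : Prop :=
  measurable_fun setT rho /\ (forall x, 0 <= rho x) /\
  (\int[lebd R d]_x (rho x)%:E = 1)%E.

Definition is_pmf (R : realType) (p : nat -> R) : Prop :=
  (forall n, 0 <= p n) /\ series p @ \oo --> (1 : R).

Definition z_omega (R : realType) (d : nat) (rhoi rhoj : Rd R d -> R) (w : R) : R :=
  Rintegral (lebd R d) setT (fun x => rhoi x `^ (1 - w) * rhoj x `^ w).

Definition fused_term (R : realType) (pi pj : nat -> R) (w z : R) (n : nat) : R :=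
  pi n `^ (1 - w) * pj n `^ w * z ^+ n.

Definition N_omega (R : realType) (pi pj : nat -> R) (w z : R) : R :=
  limn (series (fused_term pi pj w z)).

Definition p_omega (R : realType) (d : nat) (pi pj : nat -> R)
  (rhoi rhoj : Rd R d -> R) (w : R) (n : nat) : R :=
  let z := z_omega rhoi rhoj w in
  fused_term pi pj w z n / N_omega pi pj w z.

Definition I_omega (R : realType) (d : nat) (pi pj : nat -> R)
  (rhoi rhoj : Rd R d -> R) (w : R) (n : nat) : R :=
  let z := z_omega rhoi rhoj w in
  (N_omega pi pj w z * Num.min (pi n) (pj n) / (pi n `^ (1 - w) * pj n `^ w))
    `^ (n%:R)^-1.

(* Main.v *)
Require Import Defs.
From mathcomp Require Import all_boot all_order all_algebra.
From mathcomp Require Import all_classical all_reals all_analysis.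
Import Order.TTheory GRing.Theory Num.Theory numFieldNormedType.Exports.
Local Open Scope classical_set_scope.
Local Open Scope ring_scope.

Theorem corollary2 (R : realType) (d : nat) (hd : (0 < d)%N)
  (pi pj : nat -> R) (rhoi rhoj : Rd R d -> R) (w : R) :
  is_pmf pi -> is_pmf pj ->
  is_density rhoi -> is_density rhoj ->
  0 <= w <= 1 ->
  forall n : nat, (1 <= n)%N ->
  pi n != 0 -> pj n != 0 ->
  z_omega rhoi rhoj w < I_omega pi pj rhoi rhoj w n ->
  p_omega pi pj rhoi rhoj w n < Num.min (pi n) (pj n).
Proof.
move=> [pi0 _] [pj0 _] _ _ _ n n1 pin pjn.
rewrite /I_omega /p_omega /fused_term.
set z := z_omega rhoi rhoj w.
set N := N_omega pi pj w z.
set m := Num.min (pi n) (pj n).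
set a := pi n `^ (1 - w) * pj n `^ w.
have hz : 0 <= z.
  rewrite /z /z_omega /Rintegral; apply: fine_ge0; apply: integral_ge0 => x _.
  by rewrite lee_fin mulr_ge0 // powR_ge0.
have hpi : 0 < pi n by rewrite lt_def pin pi0.
have hpj : 0 < pj n by rewrite lt_def pjn pj0.
have hm : 0 < m by rewrite /m lt_min hpi hpj.
have ha : 0 < a by rewrite /a mulr_gt0 // powR_gt0.
have hN : 0 <= N.
  rewrite /N /N_omega.
  have [c|nc] := pselect (cvgn (series (fun k => pi k `^ (1 - w) * pj k `^ w * z ^+ k))).
    apply: limr_ge => //; apply: nearW => k.
    by apply: sumr_ge0 => i _; rewrite !mulr_ge0 ?powR_ge0 ?exprn_ge0.
  by rewrite dvgP.
have [N0|Npos] := eqVneq N 0.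
  by move=> _; rewrite N0 invr0 mulr0.
have hNp : 0 < N by rewrite lt_def Npos hN.
set X := N * m / a.
have hX : 0 < X by rewrite /X divr_gt0 // mulr_gt0.
move=> hzX.
have hXn : (X `^ n%:R^-1) ^+ n = X.
  rewrite -powR_mulrn ?powR_ge0 // -powRrM mulVf ?powRr1 ?ltW //.
  by rewrite pnatr_eq0 -lt0n.
have : z ^+ n < (X `^ n%:R^-1) ^+ n by rewrite ltrXn2r // -lt0n.
rewrite hXn.
rewrite /X ltr_pdivlMr // => h.
by rewrite ltr_pdivrMr // mulrC (mulrC m).
Qed.
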